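(* Let $\mathbb{ML}^{\Box\Diamond}_{\mathrm{S}}$ be as in the context. Every finite composition (word) $w$ of the unary operations $\neg,\Box,\Diamond$ coincides, as a unary operation on every algebra of $\mathbb{ML}^{\Box\Diamond}_{\mathrm{S}}$, with one of the following fifteen operations: the identity, $\neg\neg$, $\Box$, $\Diamond$, $\Diamond\Box$, $\Box\neg\neg$, $\Diamond\Box\neg\neg$, $\Box\Diamond$, $\neg$, $\Box\neg$, $\Diamond\neg$, $\Diamond\Box\neg$, $\Box\Diamond\neg$, $\Diamond\neg\Box$, $\neg\Box$.
   Context: A meet-complemented lattice is a lattice $(L,\le)$ (not necessarily distributive) such that for every $a\in L$ the element $\neg a=\max\{b\in L: a\wedge b\le c\ \text{for all } c\in L\}$ exists; it is bounded with bottom $0$ and top $1$. For $a\in L$, $\Box a=\max\{b\in L: a\vee\neg b=1\}$ and $\Diamond a=\min\{b\in L: \neg a\vee b=1\}$, when these exist. $\mathbb{ML}^{\Box\Diamond}_{\mathrm{S}}$ is the class of meet-complemented lattices in which $\Box a$ and $\Diamond a$ exist for every $a$ and which satisfy $\Box a\le\Box\Box a$ for all $a$. *)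

(* Defs.v *)
From HB Require Import structures.
From mathcomp Require Import all_boot all_order.
Set Implicit Arguments. Unset Strict Implicit. Unset Printing Implicit Defensive.
Import Order.LTheory.
Local Open Scope order_scope.

Definition is_max {d} {L : porderType d} (P : L -> Prop) (m : L) :=
  P m /\ forall b, P b -> b <= m.
Definition is_min {d} {L : porderType d} (P : L -> Prop) (m : L) :=
  P m /\ forall b, P b -> m <= b.

Definition is_meet_compl {d} {L : tbLatticeType d} (neg : L -> L) :=
  forall a, is_max (fun b => forall c, a `&` b <= c) (neg a).

Definition is_box {d} {L : tbLatticeType d} (neg box : L -> L) :=
  forall a, is_max (fun b => a `|` neg b = \top) (box a).

Definition is_dia {d} {L : tbLatticeType d} (neg dia : L -> L) :=
  forall a, is_min (fun b => neg a `|` b = \top) (dia a).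

(* the class ML^{box dia}_S, given by its (uniquely determined) operations *)
Definition in_MLS {d} {L : tbLatticeType d} (neg box dia : L -> L) :=
  [/\ is_meet_compl neg, is_box neg box, is_dia neg dia &
      forall a, box a <= box (box a)].

Inductive letter := LNeg | LBox | LDia.

(* a word [:: o1; o2; ...; on] denotes the composition o1 (o2 (... (on a))) *)
Fixpoint eval_word {T : Type} (neg box dia : T -> T) (w : seq letter) (a : T) : T :=
  match w with
  | [::] => a
  | o :: w' =>
      let x := eval_word neg box dia w' a in
      match o with LNeg => neg x | LBox => box x | LDia => dia x end
  end.

Definition fifteen : seq (seq letter) :=
  [:: [::];
      [:: LNeg; LNeg];
      [:: LBox];
      [:: LDia];
      [:: LDia; LBox];
      [:: LBox; LNeg; LNeg];
      [:: LDia; LBox; LNeg; LNeg];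
      [:: LBox; LDia];
      [:: LNeg];
      [:: LBox; LNeg];
      [:: LDia; LNeg];
      [:: LDia; LBox; LNeg];
      [:: LBox; LDia; LNeg];
      [:: LDia; LNeg; LBox];
      [:: LNeg; LBox] ].

(* Main.v *)
Require Import Defs.
From HB Require Import structures.
From mathcomp Require Import all_boot all_order.
Set Implicit Arguments. Unset Strict Implicit. Unset Printing Implicit Defensive.
Import Order.LTheory.
Local Open Scope order_scope.

Section Th.
Variables (d : Order.disp_t) (L : tbLatticeType d) (neg box dia : L -> L).
Hypothesis H : in_MLS neg box dia.

Lemma negP a b : (a `&` b = \bot) <-> b <= neg a.
Proof.
case: H => Hn _ _ _; have [Hm Hmax] := Hn a; split.
  by move=> e; apply: Hmax => c; rewrite e le0x.
move=> hb; apply/le_anti; rewrite le0x andbT.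
by apply: le_trans (Hm \bot); rewrite leI2 ?lexx.
Qed.

Lemma meetN a : a `&` neg a = \bot.
Proof. by apply/negP. Qed.

Lemma neg_anti x y : x <= y -> neg y <= neg x.
Proof.
move=> xy; apply/negP; apply/le_anti; rewrite le0x andbT.
rewrite -(meetN y) leI2 //.
Qed.

Lemma negK x : x <= neg (neg x).
Proof. by apply/negP; rewrite meetC meetN. Qed.

Lemma NNN x : neg (neg (neg x)) = neg x.
Proof. by apply/le_anti; rewrite negK neg_anti // negK. Qed.

Lemma boxP a b : b <= box a <-> a `|` neg b = \top.
Proof.
case: H => _ Hb _ _; have [Hm Hmax] := Hb a; split; last exact: Hmax.
move=> hb; apply/le_anti; rewrite lex1 /= -Hm leU2 // ?lexx // neg_anti //.
Qed.

Lemma diaP a b : dia a <= b <-> neg a `|` b = \top.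
Proof.
case: H => _ _ Hd _; have [Hm Hmin] := Hd a; split; last exact: Hmin.
move=> hb; apply/le_anti; rewrite lex1 /= -Hm leU2 // ?lexx //.
Qed.

Lemma adj a b : dia a <= b <-> a <= box b.
Proof.
split=> h; [apply/boxP; rewrite joinC; exact/diaP | apply/diaP; rewrite joinC; exact/boxP].
Qed.

Lemma box_mono x y : x <= y -> box x <= box y.
Proof.
move=> xy; apply/boxP; apply/le_anti; rewrite lex1 /=.
have e : x `|` neg (box x) = \top by apply/boxP.
by rewrite -e leU2 ?lexx.
Qed.

Lemma dia_mono x y : x <= y -> dia x <= dia y.
Proof. move=> xy; apply/adj; apply: le_trans xy _; apply/adj; exact: lexx. Qed.

Lemma boxS a : box a `|` neg (box a) = \top.
Proof. case: H => _ _ _ HS; exact/boxP/HS. Qed.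

Lemma box_le_NN x : box x <= neg (neg x).
Proof.
apply/negP; set b := box x; set e := neg x `&` b.
have hex : x `&` e = \bot by rewrite /e meetA meetN meet0x.
have h1 : x <= neg e by apply/negP; rewrite meetC.
have h2 : neg b <= neg e by apply: neg_anti; rewrite /e leIr.
have hb : x `|` neg b = \top by apply/boxP.
have hne : neg e = \top.
  by apply/le_anti; rewrite lex1 /= -hb leUx h1 h2.
by apply/le_anti; rewrite le0x andbT -/e -(meetN e) hne meetx1 lexx.
Qed.

Lemma NNB x : neg (neg (box x)) = box x.
Proof.
apply/le_anti; rewrite negK andbT; apply/boxP.
rewrite NNN; apply/boxP; exact: lexx.
Qed.

Lemma BB x : box (box x) = box x.
Proof.
case: H => _ _ _ HS; apply/le_anti; rewrite HS andbT.
by apply: le_trans (box_le_NN _) _; rewrite NNB lexx.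
Qed.

Lemma DD x : dia (dia x) = dia x.
Proof.
apply/le_anti/andP; split.
  by apply/adj; apply/adj; rewrite BB; apply/adj; exact: lexx.
have h : dia x <= box (dia (dia x)) := (adj _ _).1 (lexx _).
have h2 : x <= box (box (dia (dia x))) := (adj _ _).1 h.
rewrite BB in h2; exact: (adj _ _).2 h2.
Qed.

Lemma BDB x : box (dia (box x)) = box x.
Proof.
apply/le_anti/andP; split; last by apply/adj; exact: lexx.
by apply: box_mono; apply/adj; exact: lexx.
Qed.

Lemma DBD x : dia (box (dia x)) = dia x.
Proof.
apply/le_anti/andP; split; first by apply/adj; exact: lexx.
by apply: dia_mono; apply/adj; exact: lexx.
Qed.

Lemma DNN x : dia (neg (neg x)) = dia x.
Proof.
apply/le_anti/andP; split; apply/diaP.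
  by rewrite NNN; apply/diaP; exact: lexx.
by have := (diaP (neg (neg x)) _).1 (lexx _); rewrite NNN.
Qed.

Lemma ND x : neg (dia x) = box (neg x).
Proof.
have key b : b <= box (neg x) <-> b <= neg (dia x).
  split=> h.
    apply/negP; rewrite meetC; apply/negP; apply/diaP; exact/boxP.
  apply/boxP; apply/diaP; apply/negP; rewrite meetC; exact/negP.
apply/le_anti/andP; split; [exact: (key _).2 (lexx _) | exact: (key _).1 (lexx _)].
Qed.

Lemma BNB x : box (neg (box x)) = neg (box x).
Proof.
apply/le_anti/andP; split.
  by apply: le_trans (box_le_NN _) _; rewrite NNN lexx.
by apply/boxP; rewrite NNB joinC boxS.
Qed.

Lemma NBN x : neg (box (neg x)) = box (dia x).
Proof.
rewrite -ND; apply/le_anti/andP; split; last first.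
  by apply: le_trans (box_le_NN _) _; exact: lexx.
apply/boxP; rewrite NNN.
have := (diaP (dia x) (dia (dia x))).1 (lexx _).
by rewrite DD joinC.
Qed.

Lemma NBD x : neg (box (dia x)) = box (neg x).
Proof. by rewrite -NBN NNB. Qed.

Lemma BDNB x : box (dia (neg (box x))) = neg (box x).
Proof. by rewrite -NBN NNB BB. Qed.

End Th.

Ltac norm HH := rewrite ?(NNN HH, DNN HH, BB HH, DD HH, ND HH, NNB HH, BNB HH,
  NBN HH, BDB HH, DBD HH, NBD HH, BDNB HH).

Ltac tryj n :=
  first [ (exists (@Ordinal (size fifteen) n erefl);
           let HH := fresh "HH" in
           intros ? ? ? ? ? HH ?; simpl; norm HH; reflexivity)
        | tryj (S n) ].

Lemma step (i : 'I_(size fifteen)) (o : letter) :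
  exists j : 'I_(size fifteen),
    forall (d : Order.disp_t) (L : tbLatticeType d) (neg box dia : L -> L),
      in_MLS neg box dia ->
      forall a : L, eval_word neg box dia (o :: nth [::] fifteen i) a =
                    eval_word neg box dia (nth [::] fifteen j) a.
Proof.
case: i => k Hk; case: o;
do 15 (case: k Hk => [|k] Hk; [tryj 0%nat|]); by [].
Qed.

Theorem proposition22 :
  forall w : seq letter,
  exists i : 'I_(size fifteen), let u := nth [::] fifteen i in
    forall (d : Order.disp_t) (L : tbLatticeType d) (neg box dia : L -> L),
      in_MLS neg box dia ->
      forall a : L, eval_word neg box dia w a = eval_word neg box dia u a.
Proof.
elim=> [|o w [i IH]].
  by exists (@Ordinal (size fifteen) 0 erefl).
have [j Hj] := step i o.
exists j => u d L neg box dia H a.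
rewrite -(Hj d L neg box dia H a) /=; by rewrite IH.
Qed.
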